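(* Let $A$ be a symmetric general metric space and let $\bar A$ be its Cauchy completion: the general metric space whose points are the closed (equivalently, minimal) Cauchy filters on $A$, with $\bar A(\varphi,\psi)=\lim^-_{y\in\psi}\lim^+_{x\in\varphi}A(x,y)$. Then the $\mathcal P_1$-completion of $A$, i.e. the general metric space whose points are the closed weakly flat filters on $A$ with distance $d(\mathcal F_1,\mathcal F_2)=\lim^+_{x\in\mathcal F_1}\lim^-_{y\in\mathcal F_2}A(x,y)$, is isomorphic to the general metric space whose points are the nonempty closed subsets of $\bar A$ (for the topology of the symmetric pseudometric $\bar A$) with distance $d(X,Y)=\sup_{\varphi\in X}\inf_{\psi\in Y}\bar A(\varphi,\psi)$; the isomorphism sends a closed weakly flat filter $\mathcal F$ to the set of closed Cauchy filters containing $\mathcal F$.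
   Context: A general metric space $A$ is a set with $A(-,-):A\times A\to[0,\infty]$, $A(x,x)=0$, $A(x,z)\le A(x,y)+A(y,z)$; symmetric means $A(x,y)=A(y,x)$. A filter on $A$ is a nonempty set of nonempty subsets closed under finite intersections and supersets; $\lim^+_{\mathcal F}t=\inf_{f\in\mathcal F}\sup_{x\in f}t(x)$, $\lim^-_{\mathcal F}t=\sup_{f\in\mathcal F}\inf_{x\in f}t(x)$ ($\inf\emptyset=\infty$, $\sup\emptyset=0$); $M^-(\mathcal F)(x)=\lim^-_{y\in\mathcal F}A(x,y)$. Cauchy: $\inf_f\sup_{x,y\in f}A(x,y)=0$. Weakly flat: $\lim^+_{\mathcal F}M^-(\mathcal F)=0$. A weakly flat filter $\mathcal F$ is closed iff for every $f\in\mathcal F$ there is $\epsilon>0$ with $\{x:M^-(\mathcal F)(x)\le\epsilon\}\subseteq f$. Two general metric spaces are isomorphic if there is a bijection preserving distances. *)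

(* Defs.v *)
From mathcomp Require Import all_boot all_order all_algebra.
From mathcomp Require Import all_classical all_reals all_analysis.
Set Implicit Arguments. Unset Strict Implicit. Unset Printing Implicit Defensive.
Import Order.TTheory GRing.Theory Num.Theory.
Local Open Scope classical_set_scope.
Local Open Scope ring_scope.
Local Open Scope ereal_scope.

Section GMS.
Variables (R : realType) (A : Type).

Definition gfilter (F : set (set A)) : Prop :=
  [/\ F !=set0, (forall f, F f -> f !=set0),
      (forall f g, F f -> F g -> F (f `&` g)) &
      (forall f g, F f -> f `<=` g -> F g)].

Definition limp (F : set (set A)) (t : A -> \bar R) : \bar R :=
  ereal_inf [set ereal_sup (t @` f) | f in F].
Definition limm (F : set (set A)) (t : A -> \bar R) : \bar R :=
  ereal_sup [set ereal_inf (t @` f) | f in F].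

Variable d : A -> A -> \bar R.

Definition Mminus (F : set (set A)) (x : A) : \bar R := limm F (fun y => d x y).

Definition cauchy (F : set (set A)) : Prop :=
  ereal_inf [set ereal_sup [set d p.1 p.2 | p in f `*` f] | f in F] = 0.

Definition weakly_flat (F : set (set A)) : Prop := limp F (Mminus F) = 0.

Definition closed_filter (F : set (set A)) : Prop :=
  forall f, F f -> exists2 e : R, (0 < e)%R & [set x | Mminus F x <= e%:E] `<=` f.

Definition CF := {phi : set (set A) | [/\ gfilter phi, cauchy phi & closed_filter phi]}.

Definition dbar (phi psi : CF) : \bar R :=
  limm (sval psi) (fun y => limp (sval phi) (fun x => d x y)).

Definition P1pt := {F : set (set A) | [/\ gfilter F, weakly_flat F & closed_filter F]}.

Definition dP1 (F G : P1pt) : \bar R :=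
  limp (sval F) (fun x => limm (sval G) (fun y => d x y)).

Definition dbar_closed (X : set CF) : Prop :=
  forall phi : CF,
    (forall e : R, (0 < e)%R -> exists2 psi, X psi & dbar phi psi < e%:E) -> X phi.

Definition ClSet := {X : set CF | X !=set0 /\ dbar_closed X}.

Definition dCl (X Y : ClSet) : \bar R :=
  ereal_sup [set ereal_inf [set dbar phi psi | psi in sval Y] | phi in sval X].

End GMS.

(* Main.v *)
Require Import Defs.
From mathcomp Require Import all_boot all_order all_algebra.
From mathcomp Require Import all_classical all_reals all_analysis.
From mathcomp Require Import lra.
Set Implicit Arguments. Unset Strict Implicit. Unset Printing Implicit Defensive.
Import Order.TTheory GRing.Theory Num.Theory.
Local Open Scope classical_set_scope.
Local Open Scope ring_scope.
Local Open Scope ereal_scope.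

Section Helpers.
Variable R : realType.
Implicit Types (a b c : \bar R).

Lemma infI_le (T : Type) (f : set T) (t : T -> \bar R) x :
  f x -> ereal_inf (t @` f) <= t x.
Proof. by move=> fx; apply: ereal_inf_lbound; exists x. Qed.

Lemma le_infI (T : Type) (f : set T) (t : T -> \bar R) c :
  (forall x, f x -> c <= t x) -> c <= ereal_inf (t @` f).
Proof. by move=> H; apply: le_ereal_inf_tmp => _ [x fx <-]; apply: H. Qed.

Lemma supI_le (T : Type) (f : set T) (t : T -> \bar R) c :
  (forall x, f x -> t x <= c) -> ereal_sup (t @` f) <= c.
Proof. by move=> H; apply: ge_ereal_sup => _ [x fx <-]; apply: H. Qed.

Lemma le_supI (T : Type) (f : set T) (t : T -> \bar R) x :
  f x -> t x <= ereal_sup (t @` f).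
Proof. by move=> fx; apply: ereal_sup_ubound; exists x. Qed.

Lemma addinf (T : Type) (f : set T) (t : T -> \bar R) a c :
  0 <= c -> (forall x, f x -> 0 <= t x) ->
  (forall x, f x -> a <= c + t x) -> a <= c + ereal_inf (t @` f).
Proof.
move=> c0 t0 H; case: c c0 H => [r| |] // c0 H.
- rewrite -leeBlDl //; apply: le_infI => x fx; rewrite leeBlDl //; exact: H.
- have i0 : 0 <= ereal_inf (t @` f) by apply: le_infI.
  by rewrite addye ?leey // gt_eqF // (lt_le_trans _ i0) // ltNy0.
Qed.

Lemma addinfr (T : Type) (f : set T) (t : T -> \bar R) a c :
  0 <= c -> (forall x, f x -> 0 <= t x) ->
  (forall x, f x -> a <= t x + c) -> a <= ereal_inf (t @` f) + c.
Proof.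
move=> c0 t0 H; rewrite addeC; apply: addinf => // x fx; rewrite addeC; exact: H.
Qed.

Lemma eps_le a b : (forall e : R, (0 < e)%R -> a <= b + e%:E) -> a <= b.
Proof. by move/lee_addgt0Pr. Qed.

Lemma ge0_nNy (a : \bar R) : 0 <= a -> a != -oo.
Proof. by move=> a0; rewrite gt_eqF // (lt_le_trans _ a0) // ltNy0. Qed.

End Helpers.

Section Filters.
Variables (R : realType) (A : Type) (d : A -> A -> \bar R).
Hypothesis d_ge0 : forall x y, 0 <= d x y.
Hypothesis d_refl : forall x, d x x = 0.
Hypothesis d_tri : forall x y z, d x z <= d x y + d y z.
Hypothesis d_sym : forall x y, d x y = d y x.

Local Notation M := (Mminus d).

Definition good (F : set (set A)) := [/\ gfilter F, weakly_flat d F & closed_filter d F].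

Lemma M_ge0 F x : gfilter F -> 0 <= M F x.
Proof.
case=> [[f0 Ff0] ne _ _]; rewrite /Mminus /limm.
apply: le_trans (le_supI _ Ff0); exact: le_infI.
Qed.

Lemma M_lip F x y : gfilter F -> M F x <= d x y + M F y.
Proof.
move=> gF; rewrite /Mminus /limm; apply: supI_le => f Ff.
apply: le_trans (leeD2l _ (le_supI (fun f => ereal_inf (d y @` f)) Ff)).
apply: addinf => // z fz; apply: le_trans (d_tri x y z); exact: infI_le.
Qed.

Lemma wf_lev F (e : R) : gfilter F -> weakly_flat d F -> (0 < e)%R ->
  F [set x | M F x <= e%:E].
Proof.
move=> [_ _ _ sup] wf e0; move: wf; rewrite /weakly_flat /limp => wf.
have : ereal_inf [set ereal_sup (M F @` f) | f in F] < e%:E by rewrite wf lte_fin.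
case/ereal_inf_lt => _ [f Ff <-] lt; apply: (sup f) => // x fx /=.
exact: le_trans (le_supI _ fx) (ltW lt).
Qed.

Definition pot (m : A -> \bar R) :=
  [/\ (forall x, 0 <= m x), (forall x y, m x <= d x y + m y),
      (forall e : R, (0 < e)%R -> exists y, m y <= e%:E) &
      (forall x (e : R), (0 < e)%R -> exists y, m y <= e%:E /\ d x y <= m x + e%:E)].

Lemma potP m : pot m -> forall x (e e' : R), (0 < e)%R -> (0 < e')%R ->
  exists y, m y <= e%:E /\ d x y <= m x + e'%:E.
Proof.
case=> _ _ _ P x e e' e0 e'0.
have m0 : (0 < Num.min e e')%R by rewrite lt_min e0 e'0.
case: (P x _ m0) => y [h1 h2]; exists y; split.
  by apply: le_trans h1 _; rewrite lee_fin ge_min lexx.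
by apply: le_trans h2 _; apply: leeD2l; rewrite lee_fin ge_min lexx orbT.
Qed.

Lemma pot_M F : gfilter F -> weakly_flat d F -> pot (M F).
Proof.
move=> gF wf; split.
- by move=> x; apply: M_ge0.
- by move=> x y; apply: M_lip.
- move=> e e0; have [_ ne _ _] := gF; case: (ne _ (wf_lev gF wf e0)) => y hy.
  by exists y.
- move=> x e e0; have L := wf_lev gF wf e0.
  have hle : ereal_inf (d x @` [set x | M F x <= e%:E]) <= M F x.
    by rewrite /Mminus /limm; apply: (le_supI (fun f => ereal_inf (d x @` f))).
  case Ex: (M F x) hle => [r| |] hle.
  + have : ereal_inf (d x @` [set x | M F x <= e%:E]) < (r + e)%:E.
      by apply: le_lt_trans hle _; rewrite lte_fin ltrDl.
    by case/ereal_inf_lt => _ [y hy <-] lt; exists y; split => //; rewrite -EFinD ltW.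
  + have [_ ne _ _] := gF; case: (ne _ L) => y hy; exists y; split => //.
    by rewrite addye ?leey.
  + by move: (M_ge0 x gF); rewrite Ex.
Qed.

Definition Filt (m : A -> \bar R) : set (set A) :=
  [set f | exists2 e : R, (0 < e)%R & [set x | m x <= e%:E] `<=` f].

Lemma M_Filt m x : pot m -> M (Filt m) x = m x.
Proof.
move=> pm; have [m0 L Z P] := pm; apply/eqP; rewrite eq_le; apply/andP; split.
- rewrite /Mminus /limm; apply: supI_le => f [e e0 sf].
  apply: eps_le => e' e'0; case: (potP pm x e0 e'0) => y [h1 h2].
  exact: le_trans (infI_le _ (sf _ h1)) h2.
- apply: eps_le => e e0; rewrite /Mminus /limm.
  have Ff : Filt m [set y | m y <= e%:E] by exists e.
  apply: le_trans (leeD2r _ (le_supI (fun f => ereal_inf (d x @` f)) Ff)).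
  apply: addinfr => [|//|y hy]; first by rewrite lee_fin ltW.
  exact: le_trans (L x y) (leeD2l _ hy).
Qed.

Lemma Filt_gfilter m : pot m -> gfilter (Filt m).
Proof.
move=> pm; have [m0 L Z P] := pm; split.
- by exists setT; exists 1%R.
- move=> f [e e0 sf]; case: (Z e e0) => y hy; exists y; exact: sf.
- move=> f g [e e0 sf] [e' e'0 sg]; exists (Num.min e e'); first by rewrite lt_min e0 e'0.
  move=> y /= hy; split.
    by apply: sf; apply: le_trans hy _; rewrite lee_fin ge_min lexx.
  by apply: sg; apply: le_trans hy _; rewrite lee_fin ge_min lexx orbT.
- by move=> f g [e e0 sf] fg; exists e => //; apply: subset_trans fg.
Qed.

Lemma Filt_good m : pot m -> good (Filt m).
Proof.
move=> pm; have [m0 L Z P] := pm; have gF := Filt_gfilter pm; split => //.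
- rewrite /weakly_flat /limp; apply/eqP; rewrite eq_le; apply/andP; split.
  + apply: eps_le => e e0; rewrite add0e.
    have Ff : Filt m [set y | m y <= e%:E] by exists e.
    apply: le_trans (infI_le (fun f => ereal_sup (M (Filt m) @` f)) Ff) _.
    by apply: supI_le => y hy; rewrite M_Filt.
  + apply: le_infI => f Ff; have [_ ne _ _] := gF; case: (ne _ Ff) => y fy.
    apply: le_trans (le_supI _ fy); exact: M_ge0.
- move=> f [e e0 sf]; exists e => // y /=; rewrite M_Filt //; exact: sf.
Qed.

Lemma Filt_cauchy m : pot m -> (forall x y, d x y <= m x + m y) ->
  Defs.cauchy d (Filt m).
Proof.
move=> pm C; have [m0 L Z P] := pm; have gF := Filt_gfilter pm.
rewrite /Defs.cauchy; apply/eqP; rewrite eq_le; apply/andP; split.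
- apply: eps_le => e e0; rewrite add0e.
  have e20 : (0 < e / 2)%R by rewrite divr_gt0.
  have Ff : Filt m [set y | m y <= (e / 2)%:E] by exists (e / 2)%R.
  apply: le_trans (infI_le (fun f => ereal_sup [set d p.1 p.2 | p in f `*` f]) Ff) _.
  apply: supI_le => -[y z] [/= hy hz]; apply: le_trans (C y z) _.
  by rewrite [e in _ <= e%:E]splitr EFinD; apply: leeD.
- apply: le_infI => f Ff; have [_ ne _ _] := gF; case: (ne _ Ff) => y fy.
  apply: le_trans (le_supI (fun p => d p.1 p.2) (_ : (f `*` f) (y, y))) => //.
Qed.

Lemma good_Filt F : good F -> Filt (M F) = F.
Proof.
case=> gF wf cl; apply/seteqP; split => f.
- by case=> e e0 sf; have [_ _ _ sup] := gF; apply: sup (wf_lev gF wf e0) sf.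
- by move=> Ff; case: (cl f Ff) => e e0 sf; exists e.
Qed.






Lemma cauchy_wf F : gfilter F -> Defs.cauchy d F -> weakly_flat d F.
Proof.
move=> gF cF; have [_ ne int _] := gF.
rewrite /weakly_flat /limp; apply/eqP; rewrite eq_le; apply/andP; split.
- apply: eps_le => e e0; rewrite add0e.
  have : ereal_inf [set ereal_sup [set d p.1 p.2 | p in f `*` f] | f in F] < e%:E.
    by move: cF; rewrite /Defs.cauchy => ->; rewrite lte_fin.
  case/ereal_inf_lt => _ [f Ff <-] lt.
  apply: le_trans (infI_le (fun f => ereal_sup (M F @` f)) Ff) _.
  apply: supI_le => x fx; rewrite /Mminus /limm; apply: supI_le => g Fg.
  case: (ne _ (int _ _ Fg Ff)) => z [gz fz].
  apply: le_trans (infI_le _ gz) _; apply: le_trans (ltW lt).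
  exact: (le_supI (fun p => d p.1 p.2) (_ : (f `*` f) (x, z))).
- apply: le_infI => f Ff; case: (ne _ Ff) => y fy.
  apply: le_trans (le_supI _ fy); exact: M_ge0.
Qed.

Lemma cauchy_C F x y : gfilter F -> Defs.cauchy d F -> d x y <= M F x + M F y.
Proof.
move=> gF cF; have [_ ne int _] := gF.
apply: eps_le => e e0.
have e30 : (0 < e / 3)%R by rewrite divr_gt0.
have : ereal_inf [set ereal_sup [set d p.1 p.2 | p in f `*` f] | f in F] < (e/3)%:E.
  by move: cF; rewrite /Defs.cauchy => ->; rewrite lte_fin.
case/ereal_inf_lt => _ [f Ff <-] lt.
have hx : ereal_inf (d x @` f) <= M F x.
  by apply: (le_supI (fun f => ereal_inf (d x @` f)) Ff).
have hy : ereal_inf (d y @` f) <= M F y.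
  by apply: (le_supI (fun f => ereal_inf (d y @` f)) Ff).
have My0 := M_ge0 y gF.
case Ex: (M F x) hx => [a| |] hx; last by move: (M_ge0 x gF); rewrite Ex.
  2: by rewrite addye ?ge0_nNy // addye ?leey.
case Ey: (M F y) hy My0 => [b| |] hy My0; last by [].
  2: by rewrite addey // addye ?leey.
have : ereal_inf (d x @` f) < (a + e/3)%:E.
  by apply: le_lt_trans hx _; rewrite lte_fin ltrDl.
case/ereal_inf_lt => _ [z fz <-] lz.
have : ereal_inf (d y @` f) < (b + e/3)%:E.
  by apply: le_lt_trans hy _; rewrite lte_fin ltrDl.
case/ereal_inf_lt => _ [z' fz' <-] lz'.
have hzz : d z z' <= (e/3)%:E.
  apply: le_trans (ltW lt).
  exact: (le_supI (fun p => d p.1 p.2) (_ : (f `*` f) (z, z'))).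
apply: le_trans (d_tri x z y) _; apply: le_trans (leeD2l _ (d_tri z z' y)) _.
rewrite (d_sym z' y).
apply: le_trans (leeD (ltW lz) (leeD hzz (ltW lz'))) _.
by rewrite -!EFinD lee_fin; lra.
Qed.

Lemma CF_good (phi : CF d) : good (sval phi).
Proof. by case: phi => F [gF cF clF]; split => //; apply: cauchy_wf. Qed.

Lemma CF_g (phi : CF d) : gfilter (sval phi).
Proof. by case: phi => F [gF cF clF]. Qed.

Lemma CF_C (phi : CF d) x y : d x y <= M (sval phi) x + M (sval phi) y.
Proof. by case: phi => F [gF cF clF]; apply: cauchy_C. Qed.

Lemma limp_CF (phi : CF d) y :
  limp (sval phi) (fun x => d x y) = M (sval phi) y.
Proof.
have [gF wf cl] := CF_good phi; have [_ ne int _] := gF.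
apply/eqP; rewrite eq_le; apply/andP; split.
- apply: eps_le => e e0; have L := wf_lev gF wf e0.
  apply: le_trans (infI_le (fun f => ereal_sup ((fun x => d x y) @` f)) L) _.
  apply: supI_le => x hx; apply: le_trans (CF_C phi x y) _.
  by rewrite addeC; apply: leeD2l.
- apply: le_infI => f Ff; rewrite /Mminus /limm; apply: supI_le => g Fg.
  case: (ne _ (int _ _ Fg Ff)) => z [gz fz].
  apply: le_trans (infI_le _ gz) _; rewrite d_sym.
  exact: (le_supI (fun x => d x y) fz).
Qed.

Lemma dbar_eq (phi psi : CF d) : dbar phi psi = limm (sval psi) (M (sval phi)).
Proof.
rewrite /dbar; congr limm; apply: funext => y; exact: limp_CF.
Qed.

Lemma dbar_le (phi psi : CF d) y0 :
  dbar phi psi <= M (sval phi) y0 + M (sval psi) y0.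
Proof.
have [gF wf cl] := CF_good psi; have gP := CF_g phi.
rewrite dbar_eq /limm; apply: supI_le => g Fg.
case: (cl g Fg) => e e0 sg; apply: eps_le => e' e'0.
case: (potP (pot_M gF wf) y0 e0 e'0) => y [h1 h2].
apply: le_trans (infI_le _ (sg _ h1)) _.
apply: le_trans (M_lip y y0 gP) _; rewrite d_sym.
apply: le_trans (leeD2r _ h2) _.
by rewrite [X in X <= _]addeC addeA.
Qed.

Lemma dbar_ge (phi psi : CF d) c k : 0 <= k ->
  (forall y, c <= M (sval phi) y + M (sval psi) y + k) -> c <= dbar phi psi + k.
Proof.
move=> k0 H; have [gF wf cl] := CF_good psi; have gP := CF_g phi.
apply: eps_le => e e0; rewrite dbar_eq /limm.
have L := wf_lev gF wf e0.
have : c <= ereal_inf (M (sval phi) @` [set x | M (sval psi) x <= e%:E]) + (k + e%:E).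
  apply: addinfr.
  - by apply: adde_ge0 => //; rewrite lee_fin ltW.
  - by move=> y _; apply: M_ge0.
  - move=> y hy; apply: le_trans (H y) _; rewrite -addeA; apply: leeD2l.
    by rewrite addeC; apply: leeD2l.
move/le_trans; apply; rewrite addeA; apply: leeD2r; apply: leeD2r.
exact: (le_supI (fun f => ereal_inf (M (sval phi) @` f)) L).
Qed.

Lemma dbar_ge0 (phi psi : CF d) : 0 <= dbar phi psi.
Proof.
rewrite -[dbar _ _]adde0; apply: dbar_ge => // y.
rewrite adde0; apply: adde_ge0; apply: M_ge0 => //; exact: CF_g.
Qed.

Lemma sub_iff F G : good F -> good G ->
  (F `<=` G <-> forall x, M F x <= M G x).
Proof.
move=> [gF wF cF] [gG wG cG]; split.
- move=> FG x; apply: eps_le => e e0.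
  have e20 : (0 < e / 2)%R by rewrite divr_gt0.
  have L := FG _ (wf_lev gF wF e20).
  case: (cG _ L) => e' e'0 sL.
  case: (potP (pot_M gG wG) x e'0 e20) => y [h1 h2].
  apply: le_trans (M_lip x y gF) _.
  apply: le_trans (leeD h2 (sL _ h1)) _.
  by rewrite -addeA -EFinD -splitr.
- move=> H f Ff; case: (cF f Ff) => e e0 sf.
  have [_ _ _ sup] := gG; apply: sup (wf_lev gG wG e0) _.
  by move=> y /= hy; apply: sf; apply: le_trans (H y) hy.
Qed.



Lemma exist_refine F x (e : R) : good F -> (0 < e)%R ->
  exists phi : CF d, (forall y, M F y <= M (sval phi) y) /\
                     M (sval phi) x <= M F x + e%:E.
Proof.
move=> [gF wF cF] e0; set m := M F; have pm : pot m := pot_M gF wF.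
have [m0 mL mZ mP] := pm.
pose g (n : nat) : R := (e / 2 ^+ n)%R.
have g_pos n : (0 < g n)%R by rewrite /g divr_gt0 // exprn_gt0.
have g_S n : g n.+1 = (g n / 2)%R by rewrite /g exprS invfM mulrA mulrAC.
have g_anti n j : (g (n + j)%N <= g n)%R.
  elim: j => [|j IH]; first by rewrite addn0.
  by rewrite addnS g_S (le_trans _ IH) //; have := g_pos (n + j)%N; lra.
pose dl n := (g n / 8)%R. pose T n := (g n / 2)%R.
have dl_pos n : (0 < dl n)%R by rewrite /dl divr_gt0.
have T_ge0 n : (0 <= T n)%R by rewrite /T divr_ge0 // ltW.
have T_anti n k : (n <= k)%N -> (T k <= T n)%R.
  by move/subnKC <-; rewrite /T ler_pM2r // g_anti.
have T_small eps : (0 < eps)%R -> exists n, (T n <= eps)%R.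
  move=> eps0; pose n := Num.bound (e / eps); exists n.
  have h1 : (e / eps < n%:R)%R by apply: archi_boundP; rewrite divr_ge0 // ltW.
  have h2 : (n%:R <= (2 ^+ n : R))%R by rewrite -natrX ler_nat ltnW // ltn_expl.
  rewrite ltr_pdivrMr // in h1.
  have h3 : (e <= eps * 2 ^+ n)%R.
    by apply: (le_trans (ltW h1)); rewrite mulrC ler_pM2l.
  have h4 : (g n <= eps)%R by rewrite /g ler_pdivrMr ?exprn_gt0.
  by rewrite /T (le_trans _ h4) //; have := g_pos n; lra.
have : forall p : A * nat, exists y, m y <= (dl p.2)%:E /\ d p.1 y <= m p.1 + (dl p.2)%:E.
  by move=> [z n]; apply: mP.
case/choice => f hf.
pose y := fix y n := match n with 0 => f (x, 0%N) | k.+1 => f (y k, k.+1) end.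
have hy0 : d x (y 0%N) <= m x + (dl 0%N)%:E by case: (hf (x, 0%N)).
have hym n : m (y n) <= (dl n)%:E.
  by case: n => [|n]; [case: (hf (x, 0%N)) | case: (hf (y n, n.+1))].
have hstep n : d (y n) (y n.+1) <= (dl n + dl n.+1)%R%:E.
  case: (hf (y n, n.+1)) => _ /= h; apply: le_trans h _.
  by rewrite EFinD leeD2r.
have hchain n j : d (y n) (y (n + j)%N) <= (T n - T (n + j)%N)%R%:E.
  elim: j => [|j IH]; first by rewrite addn0 d_refl subrr.
  rewrite addnS; apply: le_trans (d_tri _ (y (n + j)%N) _) _.
  apply: le_trans (leeD IH (hstep _)) _; rewrite -EFinD lee_fin.
  rewrite /T /dl g_S; have := g_pos (n + j)%N; set a := g (n + j)%N; lra.
have hfar n k : (n <= k)%N -> d (y n) (y k) <= (T n)%:E.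
  move/subnKC <-; apply: le_trans (hchain _ _) _; rewrite lee_fin.
  by rewrite lerBlDr lerDl T_ge0.
have hany n k : d (y n) (y k) <= (T n + T k)%R%:E.
  case: (leqP n k) => nk.
    by apply: le_trans (hfar _ _ nk) _; rewrite lee_fin lerDl T_ge0.
  rewrite d_sym; apply: le_trans (hfar _ _ (ltnW nk)) _.
  by rewrite lee_fin lerDr T_ge0.
pose m' z := ereal_inf ((fun n => d z (y n) + (T n)%:E) @` setT).
have m'0 z : 0 <= m' z by apply: le_infI => n _; apply: adde_ge0; rewrite ?lee_fin.
have m'le z n : m' z <= d z (y n) + (T n)%:E by apply: (infI_le (f := setT)).
have pm' : pot m'.
  split => //.
  - move=> z w; apply: addinf => // [n _|n _]; first by apply: adde_ge0; rewrite ?lee_fin.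
    by apply: le_trans (m'le z n) _; rewrite addeA leeD2r.
  - move=> eps eps0; case: (T_small _ eps0) => n hn; exists (y n).
    by apply: le_trans (m'le _ n) _; rewrite d_refl add0e lee_fin.
  - move=> z eps eps0; case: (T_small _ eps0) => n1 hn1.
    case Ez: (m' z) => [r| |].
    + have : m' z < (r + eps)%R%:E by rewrite Ez lte_fin ltrDl.
      case/ereal_inf_lt => _ [n0 _ <-] lt.
      exists (y (maxn n0 n1)); split.
        apply: le_trans (m'le _ (maxn n0 n1)) _; rewrite d_refl add0e lee_fin.
        by apply: le_trans (T_anti _ _ _) hn1; rewrite leq_maxr.
      rewrite -EFinD; apply: le_trans (ltW lt); apply: le_trans (d_tri _ (y n0) _) _.
      by rewrite leeD2l // hfar // leq_maxl.
    + exists (y n1); split; last by rewrite addye ?leey.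
      by apply: le_trans (m'le _ n1) _; rewrite d_refl add0e lee_fin.
    + by move: (m'0 z); rewrite Ez.
have C' z w : d z w <= m' z + m' w.
  apply: addinfr => [//|n _|n _]; first by apply: adde_ge0; rewrite ?lee_fin.
  apply: addinf => [|k _|k _]; try by apply: adde_ge0; rewrite ?lee_fin.
  apply: le_trans (d_tri z (y n) w) _.
  apply: le_trans (leeD2l _ (d_tri (y n) (y k) w)) _.
  apply: le_trans (leeD2l _ (leeD2r _ (hany n k))) _.
  rewrite (d_sym (y k) w) EFinD.
  set a := d z (y n); set b := d w (y k).
  by rewrite -!addeA (addeC b).
have hphi : [/\ gfilter (Filt m'), Defs.cauchy d (Filt m') & closed_filter d (Filt m')].
  split; [exact: Filt_gfilter | exact: Filt_cauchy |].
  by have [] := Filt_good pm'.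
exists (@exist _ (fun phi => [/\ gfilter phi, Defs.cauchy d phi & closed_filter d phi])
  (Filt m') hphi) => /=; split => [z|]; rewrite M_Filt //.
- apply: le_infI => n _; apply: le_trans (mL z (y n)) _.
  apply: leeD2l; apply: le_trans (hym n) _; rewrite lee_fin /dl /T.
  by have := g_pos n; lra.
- apply: le_trans (m'le x 0%N) _; apply: le_trans (leeD2r _ hy0) _.
  rewrite -addeA leeD2l // -EFinD lee_fin /dl /T /g expr0 divr1; lra.
Qed.

Lemma M_dbar (phi psi : CF d) x :
  M (sval psi) x <= dbar phi psi + M (sval phi) x.
Proof.
apply: dbar_ge; first by apply: M_ge0; exact: CF_g.
move=> y; apply: le_trans (M_lip x y (CF_g psi)) _.
apply: le_trans (leeD2r _ (CF_C phi x y)) _.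
by rewrite (addeC (M _ x)) addeAC.
Qed.

Lemma P1_good (F : P1pt d) : good (sval F).
Proof. by case: F. Qed.

Lemma sig_eq (T : Type) (P : T -> Prop) (a b : {x | P x}) : sval a = sval b -> a = b.
Proof.
case: a b => [a pa] [b pb] /= eab; subst b; congr exist; exact: Prop_irrelevance.
Qed.

Lemma limp_ge0 F (t : A -> \bar R) : gfilter F -> (forall x, 0 <= t x) -> 0 <= limp F t.
Proof.
move=> [_ ne _ _] t0; apply: le_infI => f Ff; case: (ne _ Ff) => x fx.
exact: le_trans (t0 x) (le_supI _ fx).
Qed.

Definition mX (X : set (CF d)) x := ereal_inf [set M (sval phi) x | phi in X].

Lemma pot_mX (X : set (CF d)) : X !=set0 -> pot (mX X).
Proof.
move=> [phi0 Xphi0]; split.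
- by move=> x; apply: le_infI => phi _; apply: M_ge0; exact: CF_g.
- move=> x y; apply: addinf => [//|phi _|phi Xphi]; first by apply: M_ge0; exact: CF_g.
  apply: le_trans (infI_le (fun phi => M (sval phi) x) Xphi) _.
  exact: M_lip (CF_g phi).
- move=> e e0; have [g0 w0 _] := CF_good phi0.
  have [_ _ Z _] := pot_M g0 w0; case: (Z e e0) => y hy; exists y.
  exact: le_trans (infI_le (fun phi => M (sval phi) y) Xphi0) hy.
- move=> x e e0; have e20 : (0 < e / 2)%R by rewrite divr_gt0.
  case Ex: (mX X x) => [r| |].
  + have : mX X x < (r + e / 2)%R%:E by rewrite Ex lte_fin ltrDl.
    case/ereal_inf_lt => _ [phi Xphi <-] lt.
    have [g1 w1 _] := CF_good phi.
    case: (potP (pot_M g1 w1) x e0 e20) => y [h1 h2]; exists y; split.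
      exact: le_trans (infI_le (fun phi => M (sval phi) y) Xphi) h1.
    apply: le_trans h2 _; apply: le_trans (leeD2r _ (ltW lt)) _.
    by rewrite -!EFinD lee_fin; lra.
  + have [g0 w0 _] := CF_good phi0.
    have [_ _ Z _] := pot_M g0 w0; case: (Z e e0) => y hy; exists y; split.
      exact: le_trans (infI_le (fun phi => M (sval phi) y) Xphi0) hy.
    by rewrite addye ?leey.
  + have : 0 <= mX X x.
      by apply: le_infI => phi _; apply: M_ge0; exact: CF_g.
    by rewrite Ex.
Qed.

Lemma main_sec : exists h : P1pt d -> ClSet d,
    [/\ bijective h,
        (forall F G, dCl (h F) (h G) = dP1 F G) &
        (forall F, sval (h F) = [set phi : CF d | sval F `<=` sval phi])].
Proof.
have hP : forall F : P1pt d, [set phi : CF d | sval F `<=` sval phi] !=set0 /\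
    dbar_closed [set phi : CF d | sval F `<=` sval phi].
  move=> F; have gF := P1_good F; have [g1 w1 _] := gF; split.
  - have [_ _ Z _] := pot_M g1 w1; case: (Z 1%R ltr01) => x _.
    case: (exist_refine x gF ltr01) => phi [H _]; exists phi.
    by apply/(sub_iff gF (CF_good phi)).
  - move=> phi H; apply/(sub_iff gF (CF_good phi)) => x.
    apply: eps_le => e e0; case: (H e e0) => psi FP lt.
    have := (sub_iff gF (CF_good psi)).1 FP x => /le_trans; apply.
    apply: le_trans (M_dbar phi psi x) _; rewrite addeC; apply: leeD2l.
    exact: ltW.
pose h F : ClSet d := exist (fun X : set (CF d) => X !=set0 /\ dbar_closed X) _ (hP F).
exists h; split => //.
- pose g (X : ClSet d) : P1pt d :=
    exist (fun F => [/\ gfilter F, weakly_flat d F & closed_filter d F])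
      (Filt (mX (sval X))) (Filt_good (pot_mX (proj1 (svalP X)))).
  exists g.
  + move=> F; apply: sig_eq => /=.
    have gF := P1_good F.
    have -> : mX [set phi : CF d | sval F `<=` sval phi] = M (sval F).
      apply: funext => x; apply/eqP; rewrite eq_le; apply/andP; split.
      * apply: eps_le => e e0; case: (exist_refine x gF e0) => phi [H1 H2].
        apply: le_trans H2.
        apply: (infI_le (fun phi => M (sval phi) x)).
        by apply/(sub_iff gF (CF_good phi)).
      * apply: le_infI => phi FP; exact: (sub_iff gF (CF_good phi)).1 FP x.
    exact: good_Filt.
  + move=> X; apply: sig_eq => /=.
    have [Xne Xcl] := svalP X.
    have pm := pot_mX Xne; have gm := Filt_good pm.
    apply/seteqP; split => phi /=.
    * move/(sub_iff gm (CF_good phi)) => H; apply: Xcl => e e0.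
      have e30 : (0 < e / 3)%R by rewrite divr_gt0.
      have [g1 w1 _] := CF_good phi.
      have [_ _ Z _] := pot_M g1 w1; case: (Z _ e30) => x hx.
      have hm : mX (sval X) x < (e / 3 + e / 3)%R%:E.
        move: (H x); rewrite M_Filt // => /le_lt_trans; apply.
        by apply: le_lt_trans hx _; rewrite lte_fin ltrDl.
      case/ereal_inf_lt: hm => _ [psi Xpsi <-] lt; exists psi => //.
      apply: le_lt_trans (dbar_le phi psi x) _.
      apply: le_lt_trans (leeD2r _ hx) _.
      by rewrite -lteBrDl // -EFinB; apply: lt_le_trans lt _; rewrite lee_fin; lra.
    * move=> Xphi; apply/(sub_iff gm (CF_good phi)) => x; rewrite M_Filt //.
      exact: (infI_le (fun phi => M (sval phi) x)).
- move=> F G /=; have gF := P1_good F; have gG := P1_good G.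
  have [g1 w1 c1] := gF; have [g2 w2 c2] := gG.
  have -> : dP1 F G = limp (sval F) (M (sval G)) by [].
  apply/eqP; rewrite eq_le; apply/andP; split.
  + apply: supI_le => phi FP; apply: eps_le => eps eps0.
    have e30 : (0 < eps / 3)%R by rewrite divr_gt0.
    case ED: (limp _ _) => [r| |]; last first.
    * by move: (limp_ge0 g1 (fun x => M_ge0 x g2)); rewrite ED.
    * by rewrite addye ?leey.
    have : limp (sval F) (M (sval G)) < (r + eps / 3)%R%:E by rewrite ED lte_fin ltrDl.
    case/ereal_inf_lt => _ [f Ff <-] ltf.
    case: (c1 f Ff) => e e0 sf.
    have [gp wp _] := CF_good phi.
    have [_ _ Z _] := pot_M gp wp.
    have me0 : (0 < Num.min e (eps / 3))%R by rewrite lt_min e0 e30.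
    case: (Z _ me0) => x hx.
    have hx1 : M (sval phi) x <= e%:E.
      by apply: le_trans hx _; rewrite lee_fin ge_min lexx.
    have hx2 : M (sval phi) x <= (eps / 3)%:E.
      by apply: le_trans hx _; rewrite lee_fin ge_min lexx orbT.
    have fx : f x.
      by apply: sf; apply: le_trans hx1; exact: (sub_iff gF (CF_good phi)).1 FP x.
    have hG : M (sval G) x <= (r + eps / 3)%R%:E.
      exact: le_trans (le_supI _ fx) (ltW ltf).
    case: (exist_refine x gG e30) => psi [H1 H2].
    have Gpsi : sval G `<=` sval psi by apply/(sub_iff gG (CF_good psi)).
    apply: le_trans (infI_le (fun psi => dbar phi psi) (Gpsi : [set psi : CF d | sval G `<=` sval psi] psi)) _.
    apply: le_trans (dbar_le phi psi x) _.
    apply: le_trans (leeD hx2 (le_trans H2 (leeD2r _ hG))) _.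
    by rewrite -!EFinD lee_fin; lra.
  + apply: eps_le => eps eps0.
    have e30 : (0 < eps / 3)%R by rewrite divr_gt0.
    have L := wf_lev g1 w1 e30.
    apply: le_trans (infI_le (fun f => ereal_sup (M (sval G) @` f)) L) _.
    apply: supI_le => x hx.
    case: (exist_refine x gF e30) => phi [H1 H2].
    have Fphi : [set phi : CF d | sval F `<=` sval phi] phi.
      by apply/(sub_iff gF (CF_good phi)).
    have : M (sval G) x <= ereal_inf [set dbar phi psi | psi in
                 [set psi : CF d | sval G `<=` sval psi]] + M (sval phi) x.
      apply: addinfr => [|psi _|psi Gpsi]; first by apply: M_ge0; exact: CF_g.
        exact: dbar_ge0.
      apply: le_trans ((sub_iff gG (CF_good psi)).1 Gpsi x) _.
      exact: M_dbar.
    move/le_trans; apply.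
    apply: leeD.
      exact: (le_supI (fun phi => ereal_inf [set dbar phi psi | psi in
                 [set psi : CF d | sval G `<=` sval psi]]) Fphi).
    apply: le_trans H2 _; apply: le_trans (leeD2r _ hx) _.
    by rewrite -EFinD lee_fin; lra.
Qed.

End Filters.

Theorem mainTheorem18 (R : realType) (A : Type) (d : A -> A -> \bar R)
  (d_ge0 : forall x y, 0 <= d x y)
  (d_refl : forall x, d x x = 0)
  (d_tri : forall x y z, d x z <= d x y + d y z)
  (d_sym : forall x y, d x y = d y x) :
  exists h : P1pt d -> ClSet d,
    [/\ bijective h,
        (forall F G, dCl (h F) (h G) = dP1 F G) &
        (forall F, sval (h F) = [set phi : CF d | sval F `<=` sval phi])].
Proof. exact: main_sec. Qed.
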